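(* Let $m,n$ be positive integers with $n \geq m$, and let $G = K_m \otimes K_n$. Then: (1) If $m=n=2$, then $G$ is disconnected. (2) If $m \geq 3$ and $n \leq 2m-2$, then $\dim(G) = \left\lceil \frac{2}{3}(m+n-2) \right\rceil$. (3) If $m \geq 2$ and $n \geq 2m-1$, then $\dim(G) = n-1$.
   Context: $K_r$ denotes the complete graph (clique) on $r$ vertices. The tensor product $G \otimes H$ of simple graphs $G,H$ has vertex set $V(G)\times V(H)$, with $(u,v)$ adjacent to $(x,y)$ if and only if $ux \in E(G)$ and $vy \in E(H)$. For a connected graph $G$ with distance function $d$, and an ordered set $W=\{w_1,\dots,w_k\}\subseteq V(G)$, the metric representation of a vertex $v$ is $r(v\mid W)=(d(v,w_1),\dots,d(v,w_k))$. $W$ is a resolving set if distinct vertices have distinct representations; the metric dimension $\dim(G)$ is the minimum cardinality of a resolving set. *)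

(* Defs.v *)
From mathcomp Require Import all_boot.
Set Implicit Arguments. Unset Strict Implicit. Unset Printing Implicit Defensive.

Definition complete_graph (r : nat) : rel 'I_r := fun i j => i != j.

Arguments complete_graph r : clear implicits.

Definition tensor_graph (T U : finType) (eG : rel T) (eH : rel U) : rel (T * U) :=
  fun p q => eG p.1 q.1 && eH p.2 q.2.

Section Metric.
Variables (T : finType) (e : rel T).

Definition connected_graph : Prop := forall x y : T, connect e x y.

Fixpoint within (k : nat) (x y : T) : bool :=
  match k with
  | 0 => x == y
  | k'.+1 => within k' x y || [exists z, within k' x z && e z y]
  end.

(* Graph distance: least k with a walk of length <= k from x to y.
   (In a connected graph this is < #|T|; for unreachable pairs the value is
   the conventional #|T|, irrelevant for connected graphs.) *)
Definition dist (x y : T) : nat := find (fun k => within k x y) (iota 0 #|T|).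

Definition resolving (W : {set T}) : bool :=
  [forall u, forall v, [forall w in W, dist u w == dist v w] ==> (u == v)].

(* Metric dimension: minimum cardinality of a resolving set
   (setT is always resolving, so the search below finds the true minimum). *)
Definition metric_dim : nat :=
  find (fun k => [exists W : {set T}, resolving W && (#|W| == k)]) (iota 0 #|T|.+1).
End Metric.

(* Main.v *)
Require Import Defs.
From mathcomp Require Import all_boot zify.
Set Implicit Arguments. Unset Strict Implicit. Unset Printing Implicit Defensive.

Lemma find_iota_eq (P : pred nat) N k : k < N -> P k ->
  (forall j, j < k -> ~~ P j) -> find P (iota 0 N) = k.
Proof.
move=> kN Pk H.
have hP : has P (iota 0 N) by apply/hasP; exists k => //; rewrite mem_iota.
have iN := hP; rewrite has_find size_iota in iN.
have Pi := nth_find 0 hP; rewrite nth_iota // add0n in Pi.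
case: (ltngtP (find P (iota 0 N)) k) => [lt|gt|//].
- by move: (H _ lt); rewrite Pi.
- by have := before_find 0 gt; rewrite nth_iota // add0n Pk.
Qed.

Lemma within_refl (T : finType) (e : rel T) k x : within e k x x.
Proof. by elim: k => [|k IH] /=; rewrite ?eqxx ?IH. Qed.

Lemma within_S (T : finType) (e : rel T) k x y : within e k x y -> within e k.+1 x y.
Proof. by move=> /= ->. Qed.

Lemma within_step (T : finType) (e : rel T) k x z y :
  within e k x z -> e z y -> within e k.+1 x y.
Proof. by move=> H1 H2 /=; apply/orP; right; apply/existsP; exists z; rewrite H1. Qed.

Lemma within_le (T : finType) (e : rel T) k l x y : k <= l -> within e k x y -> within e l x y.
Proof.
move=> /subnK <-; elim: (l - k) => [|d IH] //= H.
by rewrite (IH H).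
Qed.

Lemma within1E (T : finType) (e : rel T) x y : within e 1 x y = (x == y) || e x y.
Proof.
rewrite /=; case: (x =P y) => //= _; apply/existsP/idP => [[z /andP[/eqP -> ->]] //|H].
by exists x; rewrite eqxx.
Qed.

Lemma withinSE (T : finType) (e : rel T) k x y :
  within e k.+1 x y = within e k x y || [exists z, within e k x z && e z y].
Proof. by []. Qed.

Lemma within2E (T : finType) (e : rel T) x y : within e 2 x y ->
  [|| x == y, e x y | [exists z, e x z && e z y]].
Proof.
rewrite withinSE within1E => /orP[/orP[H|H]|/existsP[z /andP[]]]; try by rewrite H ?orbT.
move=> H1 H2; move: H1; rewrite within1E => /orP[/eqP Hx|h1]; first by rewrite Hx H2 orbT.
by apply/or3P; apply: Or33; apply/existsP; exists z; rewrite h1 H2.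
Qed.

Lemma dist_eq (T : finType) (e : rel T) x y k : within e k x y ->
  (0 < k -> ~~ within e k.-1 x y) -> k < #|T| -> dist e x y = k.
Proof.
move=> Hk Hn kT; apply: find_iota_eq => // j jk; apply/negP => Hj.
have k0 : 0 < k by case: k Hk Hn kT jk.
move: (Hn k0); rewrite (within_le _ Hj) //; case: k Hk Hn kT jk k0 => //.
Qed.

Lemma resolvingP (T : finType) (e : rel T) (W : {set T}) : reflect
  (forall u v, (forall w, w \in W -> dist e u w = dist e v w) -> u = v) (resolving e W).
Proof.
apply: (iffP forallP) => [H u v Huv|H u].
  apply/eqP; move/forallP: (H u) => /(_ v) /implyP; apply.
  by apply/forall_inP => w /Huv ->.
apply/forallP => v; apply/implyP => /forall_inP Hw; apply/eqP/H => w /Hw /eqP //.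
Qed.

Lemma resolving_sub (T : finType) (e : rel T) (W W' : {set T}) : W \subset W' ->
  resolving e W -> resolving e W'.
Proof.
move=> /subsetP sW /resolvingP H; apply/resolvingP => u v Huv.
by apply: H => w /sW; apply: Huv.
Qed.

Lemma extend_set (T : finType) d (W : {set T}) : #|W| + d <= #|T| ->
  exists2 W' : {set T}, W \subset W' & #|W'| = #|W| + d.
Proof.
elim: d W => [|d IH] W H; first by exists W; rewrite ?addn0.
have : 0 < #|~: W| by move: (cardsC W) H; lia.
case/card_gt0P => x; rewrite inE => xW.
have c1 : #|x |: W| = #|W|.+1 by rewrite cardsU1 xW.
have [W' s1 c2] := IH (x |: W) ltac:(by rewrite c1; lia).
exists W'; last by rewrite c2 c1; lia.
by apply: subset_trans s1; apply: subsetUr.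
Qed.

Lemma metric_dim_eq (T : finType) (e : rel T) k :
  k <= #|T| ->
  (exists2 W : {set T}, resolving e W & #|W| <= k) ->
  (forall W : {set T}, resolving e W -> k <= #|W|) ->
  metric_dim e = k.
Proof.
move=> kT [W RW Wk] Hlb; apply: find_iota_eq => //.
- have [W' s1 c2] := extend_set (d := k - #|W|) (W := W) ltac:(lia).
  by apply/existsP; exists W'; rewrite (resolving_sub s1 RW) c2 /=; apply/eqP; lia.
- move=> j jk; apply/existsP => -[W' /andP[R /eqP c]].
  by move: (Hlb _ R); lia.
Qed.

Notation E m n := (tensor_graph (complete_graph m) (complete_graph n)).

Lemma ex_other n (i j : 'I_n) : 2 < n -> exists k : 'I_n, (k != i) && (k != j).
Proof.
move=> n2; have : 0 < #|~: [set i; j]|.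
  by move: (cardsC [set i; j]) (cards2 i j); rewrite card_ord; case: (i != j) => /=; lia.
case/card_gt0P => k; rewrite !inE negb_or => H; by exists k.
Qed.

Lemma ex_other1 n (i : 'I_n) : 1 < n -> exists k : 'I_n, k != i.
Proof.
move=> n2; have : 0 < #|~: [set i]|.
  by move: (cardsC [set i]) (cards1 i); rewrite card_ord; lia.
case/card_gt0P => k; rewrite !inE => H; by exists k.
Qed.

Lemma I2 (i j k : 'I_2) : i != j -> (k == i) || (k == j).
Proof.
rewrite -!val_eqE; case: i j k => [[|[|?]] ?] [[|[|?]] ?] [[|[|?]] ?] //=.
Qed.

Lemma card_T m n : #|{: 'I_m * 'I_n}| = m * n.
Proof. by rewrite card_prod !card_ord. Qed.

Ltac adj := rewrite /tensor_graph /complete_graph /=; apply/andP; split; apply/eqP => Heq; subst;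
  try congruence; match goal with H : is_true (?x != ?x) |- _ => by rewrite eqxx in H end.

Ltac nadj := rewrite /tensor_graph /complete_graph /= => /andP[/eqP ? /eqP ?]; congruence.

Lemma dist_formula m n (Hm : 1 < m) (Hn : 2 < n) (p q : 'I_m * 'I_n) :
  dist (E m n) p q = if p == q then 0 else if (p.1 != q.1) && (p.2 != q.2) then 1
     else if (p.1 != q.1) && (m == 2) then 3 else 2.
Proof.
case: p q => [a b] [c d] /=; rewrite xpair_eqE.
case: (a =P c) => [<-|nac]; case: (b =P d) => [<-|nbd] /=.
- by apply: dist_eq => //; [exact: within_refl | rewrite card_T; nia].
- have [k1 Hk1] := ex_other1 a Hm; have [k2 /andP[Hk2 Hk2']] := ex_other b d Hn.
  apply: dist_eq; last (by rewrite card_T; nia).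
  + apply: (within_step (z := (k1, k2))); last by adj.
    apply: (within_step (z := (a, b))); first exact: within_refl.
    by adj.
  + by move=> _; rewrite within1E; apply/negP => /orP[/eqP H|]; [congruence|nadj].
- case: (m =P 2) => [m2|m2].
  + subst m.
    have [k1 Hk1] := ex_other1 b (ltnW Hn); have [k2 /andP[Hk2 Hk2']] := ex_other k1 b Hn.
    apply: dist_eq; last (by rewrite card_T; nia).
    * apply: (within_step (z := (a, k2))); last first.
        by adj.
      apply: (within_step (z := (c, k1))); last first.
        by adj.
      apply: (within_step (z := (a, b))); first exact: within_refl.
      by adj.
    * move=> _; apply/negP => /within2E /or3P [/eqP H|H|/existsP [[z1 z2] /andP[H1 H2]]].
      - congruence.
      - by move: H; nadj.
      - have /orP[/eqP E1|/eqP E1] : (z1 == a) || (z1 == c) by apply: I2; apply/eqP.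
        + by move: H1; subst; nadj.
        + by move: H2; subst; nadj.
  + have m3 : 2 < m by lia.
    have [k1 /andP[Hk1 Hk1']] := ex_other a c m3; have [k2 Hk2] := ex_other1 b (ltnW Hn).
    apply: dist_eq; last (by rewrite card_T; nia).
    * apply: (within_step (z := (k1, k2))); last first.
        by adj.
      apply: (within_step (z := (a, b))); first exact: within_refl.
      by adj.
    * by move=> _; rewrite within1E; apply/negP => /orP[/eqP H|]; [congruence|nadj].
- apply: dist_eq; last (by rewrite card_T; nia).
  + apply: (within_step (z := (a, b))); first exact: within_refl.
    by adj.
  + move=> _ /=; apply/eqP; congruence.
Qed.

Definition code m n (p q : 'I_m * 'I_n) : nat :=
  if p == q then 0 else if (p.1 != q.1) && (p.2 != q.2) then 1 else 2.

Ltac crush := rewrite /code ?xpair_eqE /=;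
  repeat (match goal with |- context [?x == ?y] => case: (x =P y) => ?; subst end);
  simpl; try congruence; try lia; intuition congruence.

Lemma code_dist m n (Hm : 1 < m) (Hn : 2 < n) (p q : 'I_m * 'I_n) :
  code p q = minn (dist (E m n) p q) 2.
Proof. by rewrite dist_formula // /code; case: ifP => //; case: ifP => //; case: ifP. Qed.

Lemma dist_code3 m n (Hm : 2 < m) (Hn : 2 < n) (p q : 'I_m * 'I_n) :
  dist (E m n) p q = code p q.
Proof.
rewrite dist_formula ?(ltnW Hm) // /code; case: ifP => //; case: ifP => // _ _.
by case: (m =P 2) => [?|]; [lia|rewrite andbF].
Qed.

Lemma dist_row m n (Hm : 1 < m) (Hn : 2 < n) (a : 'I_m) (b d : 'I_n) q :
  code (a, b) q = code (a, d) q -> dist (E m n) (a, b) q = dist (E m n) (a, d) q.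
Proof.
rewrite !dist_formula // /code /=.
case: ifP => _; case: ifP => _ //; case: ifP => _ //; case: ifP => _ //.
Qed.

Lemma L1 m n (a c x : 'I_m) (b d y : 'I_n) : a <> c -> b <> d ->
  (a, b) <> (x, y) -> (c, d) <> (x, y) -> code (a, b) (x, y) = code (c, d) (x, y) ->
  x = a \/ y = b \/ x = c \/ y = d -> (x = a /\ y = d) \/ (x = c /\ y = b).
Proof. move=> h1 h2 h3 h4; crush. Qed.

Lemma L2 m n (a x : 'I_m) (b d y : 'I_n) : b <> d ->
  (a, b) <> (x, y) -> (a, d) <> (x, y) -> code (a, b) (x, y) = code (a, d) (x, y) ->
  y <> b /\ y <> d.
Proof. move=> h2 h3 h4; crush. Qed.

Lemma L3 m n (a c x : 'I_m) (b y : 'I_n) : a <> c ->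
  (a, b) <> (x, y) -> (c, b) <> (x, y) -> code (a, b) (x, y) = code (c, b) (x, y) ->
  x <> a /\ x <> c.
Proof. move=> h2 h3 h4; crush. Qed.

Lemma L4 m n (a c x : 'I_m) (b d y : 'I_n) : a <> c -> b <> d ->
  (x <> a /\ x <> c /\ y <> b /\ y <> d) \/ (x = a /\ y = d) \/ (x = c /\ y = b) ->
  code (a, b) (x, y) = code (c, d) (x, y).
Proof. move=> h1 h2; crush. Qed.

Lemma L5 m n (a c x : 'I_m) (b y : 'I_n) : a <> c -> x <> a -> x <> c ->
  code (a, b) (x, y) = code (c, b) (x, y).
Proof. move=> h1 h2 h3; crush. Qed.

Lemma L6 m n (a x : 'I_m) (b d y : 'I_n) : b <> d -> y <> b -> y <> d ->
  code (a, b) (x, y) = code (a, d) (x, y).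
Proof. move=> h1 h2 h3; crush. Qed.

Lemma resolving_suff m n (Hm : 1 < m) (Hn : 2 < n) (W : {set 'I_m * 'I_n}) :
 (forall i i' : 'I_m, i != i' -> exists2 w, w \in W & (w.1 == i) || (w.1 == i')) ->
 (forall j j' : 'I_n, j != j' -> exists2 w, w \in W & (w.2 == j) || (w.2 == j')) ->
 (forall w, w \in W -> exists2 w', w' \in W & (w' != w) && ((w'.1 == w.1) || (w'.2 == w.2))) ->
 resolving (E m n) W.
Proof.
move=> R1 R2 R3; apply/resolvingP => u v Huv.
have Hc w : w \in W -> code u w = code v w by move=> wW; rewrite !code_dist // Huv.
have inW (x y : 'I_m * 'I_n) : code x x = code y x -> y = x.
  by rewrite /code eqxx; case: (y =P x) => //; case: ifP.
case: (boolP (u \in W)) => uW; first by rewrite (inW _ _ (Hc _ uW)).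
case: (boolP (v \in W)) => vW; first by rewrite (inW _ _ (esym (Hc _ vW))).
have nW (z : 'I_m * 'I_n) : z \in W -> forall x y, (x, y) \notin W -> (x, y) <> z.
  by move=> zW x y H Hxy; rewrite Hxy zW in H.
move: Huv Hc uW vW; case: u => [a b]; case: v => [c d] _ Hc uW vW.
case: (a =P c) => [eac|nac]; case: (b =P d) => [ebd|nbd]; try congruence.
- subst c; have [[x y] wW /orP H] := R2 b d (introN eqP nbd).
  have [hb hd] := L2 nbd (nW _ wW a b uW) (nW _ wW a d vW) (Hc _ wW).
  by case: H => /eqP /= ?.
- subst d; have [[x y] wW /orP H] := R1 a c (introN eqP nac).
  have [hb hd] := L3 nac (nW _ wW a b uW) (nW _ wW c b vW) (Hc _ wW).
  by case: H => /eqP /= ?.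
- have K : forall x y, (x, y) \in W -> x = a \/ y = b \/ x = c \/ y = d ->
      (x = a /\ y = d) \/ (x = c /\ y = b).
    by move=> x y wW; apply: L1 => //; [apply: nW wW a b uW | apply: nW wW c d vW | apply: Hc].
  have [[x y] wW /orP H] := R1 a c (introN eqP nac).
  have Kw : (x = a /\ y = d) \/ (x = c /\ y = b) by apply: K => //; case: H => /eqP /= Hx; tauto.
  have [[x' y'] wW' /andP[/eqP nw /orP H']] := R3 _ wW.
  have Kw' : (x' = a /\ y' = d) \/ (x' = c /\ y' = b).
    apply: K => //; case: H' => /eqP /= Hx; case: Kw => -[Ha Hb]; subst; tauto.
  move: nw H'; case: Kw => -[-> ->]; case: Kw' => -[-> ->] => nw; try congruence;
    by case => /eqP Hq; simpl in Hq; congruence.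
Qed.

Definition cnt (T I : finType) (f : T -> I) (S : {set T}) (i : I) :=
  #|[set w in S | f w == i]|.
Definition single (T I : finType) (f : T -> I) (S : {set T}) :=
  [set w in S | cnt f S (f w) == 1].

Lemma card_part (T I : finType) (f : T -> I) (S : {set T}) : #|S| = \sum_i cnt f S i.
Proof.
rewrite -sum1_card (partition_big f predT) //=; apply: eq_bigr => i _.
by rewrite /cnt -sum1_card; apply: eq_bigl => w; rewrite !inE.
Qed.

Lemma cnt_pos (T I : finType) (f : T -> I) (S : {set T}) i :
  (i \in f @: S) = (0 < cnt f S i).
Proof.
apply/imsetP/card_gt0P => [[w wS ->]|[w]]; first by exists w; rewrite !inE wS eqxx.
by rewrite !inE => /andP[wS /eqP <-]; exists w.
Qed.

Lemma cnt_uniq (T I : finType) (f : T -> I) (S : {set T}) w w' :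
  cnt f S (f w) = 1 -> w \in S -> w' \in S -> f w' = f w -> w' = w.
Proof.
move=> c1 wS w'S fe; have /card_le1_eqP H : #|[set x in S | f x == f w]| <= 1 by rewrite -/(cnt _ _ _) c1.
by apply: H; rewrite !inE ?wS ?w'S ?fe eqxx.
Qed.

Lemma count_bound (T I : finType) (f : T -> I) (S : {set T}) :
  2 * #|f @: S| <= #|S| + #|single f S|.
Proof.
rewrite (card_part f S) (card_part f (single f S)).
have -> : #|f @: S| = \sum_i (0 < cnt f S i).
  rewrite -sum1_card big_mkcond /=; apply: eq_bigr => i _; rewrite cnt_pos.
  by case: (0 < _).
rewrite big_distrr /= -big_split /=; apply: leq_sum => i _.
have -> : cnt f (single f S) i = if cnt f S i == 1 then 1 else 0.
  rewrite /cnt /single; case: eqP => H.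
  - rewrite -H; apply: eq_card => w; rewrite !inE.
    by case: (f w =P i) => [->|]; rewrite ?andbT ?andbF // /cnt H eqxx andbT.
  - apply: eq_card0 => w; rewrite !inE.
    case: (f w =P i) => [->|]; rewrite ?andbF //.
    by move/eqP: H => /negbTE; rewrite /cnt => ->; rewrite andbF.
by case: (cnt f S i) => [|[|k]] //=; lia.
Qed.

Lemma lb_cols m n (Hm : 1 < m) (Hn : 2 < n) (W : {set 'I_m * 'I_n}) :
  resolving (E m n) W -> #|~: [set w.2 | w in W]| <= 1.
Proof.
move=> /resolvingP R; apply/card_le1_eqP => j j'; rewrite !inE => Hj Hj'.
case: (j =P j') => // nj; exfalso.
pose i0 : 'I_m := Ordinal (ltnW Hm).
have : (i0, j) = (i0, j') by apply: R => -[x y] wW; apply: dist_row => //; apply: L6 => // yj;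
  [move: Hj | move: Hj']; rewrite -yj; move/negP; apply; apply/imsetP; exists (x, y).
congruence.
Qed.

Lemma lb_rows m n (Hm : 2 < m) (Hn : 2 < n) (W : {set 'I_m * 'I_n}) :
  resolving (E m n) W -> #|~: [set w.1 | w in W]| <= 1.
Proof.
move=> /resolvingP R; apply/card_le1_eqP => i i'; rewrite !inE => Hi Hi'.
case: (i =P i') => // ni; exfalso.
pose j0 : 'I_n := Ordinal (ltnW (ltnW Hn)).
have : (i, j0) = (i', j0) by apply: R => -[x y] wW; rewrite !dist_code3 //; apply: L5 => // xi;
  [move: Hi | move: Hi']; rewrite -xi; move/negP; apply; apply/imsetP; exists (x, y).
congruence.
Qed.

Lemma lb_bad m n (Hm : 2 < m) (Hn : 2 < n) (W : {set 'I_m * 'I_n}) a c b d :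
  a <> c -> b <> d ->
  (forall x y, (x, y) \in W -> x = a \/ y = b \/ x = c \/ y = d ->
      (x = a /\ y = d) \/ (x = c /\ y = b)) -> ~ resolving (E m n) W.
Proof.
move=> nac nbd K /resolvingP R.
have : (a, b) = (c, d); last congruence.
apply: R => -[x y] wW; rewrite !dist_code3 //; apply: L4 => //.
case: (x =P a) => [xa|xa]; first by right; have := K x y wW; tauto.
case: (x =P c) => [xc|xc]; first by right; have := K x y wW; tauto.
case: (y =P b) => [yb|yb]; first by right; have := K x y wW; tauto.
case: (y =P d) => [yd|yd]; first by right; have := K x y wW; tauto.
by left.
Qed.

Lemma lb2 m n (Hm : 2 < m) (Hn : 2 < n) (W : {set 'I_m * 'I_n}) :
  resolving (E m n) W -> 2 * (m + n - 2) <= 3 * #|W|.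
Proof.
move=> RW.
set R := [set w.1 | w in W]; set C := [set w.2 | w in W].
set A := single (fun w : 'I_m * 'I_n => w.1) W.
set B := single (fun w : 'I_m * 'I_n => w.2) W.
have h1 : 2 * #|R| <= #|W| + #|A| by apply: count_bound.
have h2 : 2 * #|C| <= #|W| + #|B| by apply: count_bound.
have h3 : #|~: R| <= 1 by apply: lb_rows.
have h4 : #|~: C| <= 1 by apply: lb_cols => //; lia.
have cR : #|R| + #|~: R| = m by rewrite cardsC card_ord.
have cC : #|C| + #|~: C| = n by rewrite cardsC card_ord.
have hU : #|A :|: B| <= #|W|.
  by apply: subset_leq_card; rewrite subUset; apply/andP; split; apply/subsetP => w; rewrite inE => /andP[].
have hUI := cardsUI A B.
have iso w : w \in A :&: B -> w \in W /\ (forall w', w' \in W -> (w'.1 = w.1 \/ w'.2 = w.2) -> w' = w).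
  rewrite !inE => /andP[/andP[wW /eqP c1] /andP[_ /eqP c2]]; split => // w' w'W [e|e].
  - exact: (@cnt_uniq _ _ fst W w w' c1 wW w'W e).
  - exact: (@cnt_uniq _ _ snd W w w' c2 wW w'W e).
have hI : #|A :&: B| <= 1.
  apply/card_le1_eqP => w1 w2 /iso [w1W i1] /iso [w2W i2].
  case: (w1 =P w2) => // nw; exfalso.
  move: w1 w2 w1W i1 w2W i2 nw => [a d] [c b] /= w1W i1 w2W i2 nw.
  have nac : a <> c by move=> ac; apply: nw; apply: i2 => //; left.
  have nbd : b <> d by move=> bd; apply: nw; apply: i2 => //; right.
  apply: (lb_bad Hm Hn nac nbd _ RW) => x y wW [xa|[yb|[xc|yd]]].
  - by left; have := i1 _ wW (or_introl xa); case.
  - by right; have := i2 _ wW (or_intror yb); case.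
  - by right; have := i2 _ wW (or_introl xc); case.
  - by left; have := i1 _ wW (or_intror yd); case.
have hIE : 0 < #|A :&: B| -> #|~: R| = 0 \/ #|~: C| = 0.
  case/card_gt0P => -[a d] /iso [w1W i1].
  case: (posnP #|~: R|) => [->|/card_gt0P [c]]; first by left.
  case: (posnP #|~: C|) => [->|/card_gt0P [b]]; first by right.
  rewrite !inE => Hb Hc; exfalso.
  have nac : a <> c by move=> ac; move: Hc; rewrite -ac; move/negP; apply; apply/imsetP; exists (a, d).
  have nbd : b <> d by move=> bd; move: Hb; rewrite bd; move/negP; apply; apply/imsetP; exists (a, d).
  apply: (lb_bad Hm Hn nac nbd _ RW) => x y wW [xa|[yb|[xc|yd]]].
  - by left; have := i1 _ wW (or_introl xa); case.
  - by move: Hb; rewrite -yb; move/negP; case; apply/imsetP; exists (x, y).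
  - by move: Hc; rewrite -xc; move/negP; case; apply/imsetP; exists (x, y).
  - by left; have := i1 _ wW (or_intror yd); case.
case: (posnP #|A :&: B|) => [h0|hp]; [lia | move: (hIE hp); lia].
Qed.

Lemma construct m n (Hm : 1 < m) (Hn : 2 < n) k (f : nat -> nat * nat) :
 (forall t, t < k -> (f t).1 < m /\ (f t).2 < n) ->
 (forall i, i < m.-1 -> exists2 t, t < k & (f t).1 = i) ->
 (forall j, j < n.-1 -> exists2 t, t < k & (f t).2 = j) ->
 (forall t, t < k -> exists2 t', t' < k &
     f t' <> f t /\ ((f t').1 = (f t).1 \/ (f t').2 = (f t).2)) ->
 exists2 W : {set 'I_m * 'I_n}, resolving (E m n) W & #|W| <= k.
Proof.
case: m Hm => [|m] // Hm; case: n Hn => [|n] // Hn F0 F1 F2 F3.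
pose g (t : 'I_k) : 'I_m.+1 * 'I_n.+1 := (inord (f t).1, inord (f t).2).
exists (g @: [set: 'I_k]); last by rewrite (leq_trans (leq_imset_card _ _)) // cardsT card_ord.
have g1 (t : 'I_k) : val (g t).1 = (f t).1 by rewrite /= inordK //; have := F0 _ (ltn_ord t); lia.
have g2 (t : 'I_k) : val (g t).2 = (f t).2 by rewrite /= inordK //; have := F0 _ (ltn_ord t); lia.
apply: resolving_suff => //.
- move=> i i' ni.
  have [ii|ii] : val i < m \/ val i' < m.
    have := ltn_ord i; have := ltn_ord i'; move: ni; rewrite -val_eqE /=; lia.
  + have [t tk ft] := F1 _ ii; exists (g (Ordinal tk)); first by apply/imsetP; exists (Ordinal tk).
    by rewrite -val_eqE g1 /= ft eqxx.
  + have [t tk ft] := F1 _ ii; exists (g (Ordinal tk)); first by apply/imsetP; exists (Ordinal tk).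
    by rewrite -[_ == i']val_eqE g1 /= ft eqxx orbT.
- move=> i i' ni.
  have [ii|ii] : val i < n \/ val i' < n.
    have := ltn_ord i; have := ltn_ord i'; move: ni; rewrite -val_eqE /=; lia.
  + have [t tk ft] := F2 _ ii; exists (g (Ordinal tk)); first by apply/imsetP; exists (Ordinal tk).
    by rewrite -val_eqE g2 /= ft eqxx.
  + have [t tk ft] := F2 _ ii; exists (g (Ordinal tk)); first by apply/imsetP; exists (Ordinal tk).
    by rewrite -[_ == i']val_eqE g2 /= ft eqxx orbT.
- move=> w /imsetP [t _ ->].
  have [t' tk [ne sh]] := F3 _ (ltn_ord t).
  exists (g (Ordinal tk)); first by apply/imsetP; exists (Ordinal tk).
  apply/andP; split.
  + apply/eqP => e; apply: ne.
    have e1 : val (g (Ordinal tk)).1 = val (g t).1 by rewrite e.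
    have e2 : val (g (Ordinal tk)).2 = val (g t).2 by rewrite e.
    rewrite !g1 in e1; rewrite !g2 in e2.
    by rewrite [f t']surjective_pairing [f t]surjective_pairing e1 e2.
  + case: sh => e; apply/orP; [left|right]; rewrite -val_eqE ?g1 ?g2 /= e //.
Qed.

Lemma ub3 m n (Hm : 1 < m) (Hn : 2 * m - 1 <= n) :
  exists2 W : {set 'I_m * 'I_n}, resolving (E m n) W & #|W| <= n - 1.
Proof.
apply: (@construct m n Hm ltac:(lia) (n - 1) (fun t => (minn (t %/ 2) (m - 2), t))) => /=.
- by move=> t tk; split; lia.
- move=> i im; exists (2 * i); lia.
- by move=> j jn; exists j => //; lia.
- move=> t tk.
  case: (boolP (t %% 2 == 1)) => [/eqP o|/eqP o].
    exists (t - 1); first lia.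
    split; [case; lia | left; lia].
  case: (boolP (t.+1 < n - 1)) => h.
    exists t.+1; first lia.
    split; [case; lia | left; lia].
  exists (t - 1); first lia.
  split; [case; lia | left; lia].
Qed.

Definition fcon T S t : nat * nat :=
  let B := 2 * (T + S) in
  let R0 := T + 2 * S in let C0 := 2 * T + S in
  if t < 2 * T then (t %/ 2, t)
  else if t < B then (T + (t - 2 * T), 2 * T + (t - 2 * T) %/ 2)
  else if t == B then (R0, C0)
  else if t == B.+1 then (R0, C0.+1)
  else (R0.+1, C0.+1).

Ltac ifs := repeat (case: ifP => ? /=).

Lemma ub2_gen m n T S e (Hm : 2 < m) (Hn : 2 < n)
 (He : (e = 0 /\ T + 2*S = m-1 /\ 2*T + S = n-1) \/ (e = 3 /\ T + 2*S = m-3 /\ 2*T+S = n-3)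
       \/ (e = 2 /\ T+2*S = m-2 /\ 2*T+S = n-2)) :
 exists2 W : {set 'I_m * 'I_n}, resolving (E m n) W & #|W| <= 2 * (T + S) + e.
Proof.
apply: (@construct m n ltac:(lia) Hn _ (fcon T S)); rewrite /fcon.
- by move=> t tk; ifs; split; lia.
- move=> i im.
  case: (ltnP i T) => h1; [exists (2 * i) | case: (ltnP i (T + 2 * S)) => h2;
    [exists (2 * T + (i - T)) | case: (i =P T + 2 * S) => h3;
      [exists (2 * (T + S)) | exists (2 * (T + S)).+2]]]; ifs; lia.
- move=> j jn.
  case: (ltnP j (2 * T)) => h1; [exists j | case: (ltnP j (2 * T + S)) => h2;
    [exists (2 * T + 2 * (j - 2 * T)) | case: (j =P 2 * T + S) => h3;
      [exists (2 * (T + S)) | exists (2 * (T + S)).+1]]]; ifs; lia.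
- move=> t tk.
  case: (ltnP t (2 * (T + S))) => h1; [case: (t %% 2 =P 1) => h2; [exists (t - 1) | exists t.+1]
    | case: (t =P 2 * (T + S)) => h3; [exists t.+1 | exists (t - 1)]];
  ifs; try lia; split; try (case; lia); lia.
Qed.

Lemma part1 : ~ connected_graph (tensor_graph (complete_graph 2) (complete_graph 2)).
Proof.
move/(_ (ord0, ord0) (ord0, ord_max)).
set e := tensor_graph _ _.
have cl : closed e [pred p : 'I_2 * 'I_2 | p.1 == p.2].
  move=> [a b] [c d]; rewrite /e /tensor_graph /complete_graph /= => /andP[ac bd].
  have := I2 c ac; have := I2 d bd; rewrite -!val_eqE /=.
  move: a b c d ac bd => [[|[|?]] ?] [[|[|?]] ?] [[|[|?]] ?] [[|[|?]] ?] //=.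
by move/(closed_connect cl) => /=.
Qed.

Lemma t0 a b T rT q : a <= 2*b -> 2*b - a = T * 3 + rT -> rT < 3 -> a + b = q * 3 + 0 -> rT = 0.
Proof. lia. Qed.
Lemma t1 a b T rT q : a <= 2*b -> 2*b - a = T * 3 + rT -> rT < 3 -> a + b = q * 3 + 1 -> rT = 2.
Proof. lia. Qed.
Lemma t2 a b T rT q : a <= 2*b -> 2*b - a = T * 3 + rT -> rT < 3 -> a + b = q * 3 + 2 -> rT = 1.
Proof. lia. Qed.
Lemma k0 s k rk q : s * 2 + 2 = k * 3 + rk -> rk < 3 -> s = q * 3 + 0 -> k = 2 * q.
Proof. lia. Qed.
Lemma k1 s k rk q : s * 2 + 2 = k * 3 + rk -> rk < 3 -> s = q * 3 + 1 -> k = 2 * q + 1.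
Proof. lia. Qed.
Lemma k2 s k rk q : s * 2 + 2 = k * 3 + rk -> rk < 3 -> s = q * 3 + 2 -> k = 2 * q + 2.
Proof. lia. Qed.

Lemma ub2 m n (Hm : 2 < m) (Hmn : m <= n) (Hn : n <= 2 * m - 2) :
  exists2 W : {set 'I_m * 'I_n}, resolving (E m n) W & #|W| <= (2 * (m + n - 2) + 2) %/ 3.
Proof.
have hs : 2 * (m + n - 2) + 2 = ((m - 1) + (n - 1)) * 2 + 2 by lia.
rewrite hs.
set X := ((m - 1) + (n - 1)) * 2 + 2.
move: (divn_eq X 3) (@ltn_pmod X 3 isT); move: (X %/ 3) (X %% 3) => k rk hk lk.
set Y := 2 * (n - 1) - (m - 1).
move: (divn_eq Y 3) (@ltn_pmod Y 3 isT); move: (Y %/ 3) (Y %% 3) => T rT hT lT.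
set Z := 2 * (m - 1) - (n - 1).
move: (divn_eq Z 3) (@ltn_pmod Z 3 isT); move: (Z %/ 3) (Z %% 3) => S rS hS lS.
set U := (m - 1) + (n - 1).
move: (divn_eq U 3) (@ltn_pmod U 3 isT); move: (U %/ 3) (U %% 3) => q r hq lr.
rewrite /X /Y /Z /U in hk hT hS hq *.
have ab1 : m - 1 <= 2 * (n - 1) by lia.
have ab2 : n - 1 <= 2 * (m - 1) by lia.
have [r0|[r1|r2]] : r = 0 \/ r = 1 \/ r = 2 by lia.
- subst r.
  have := t0 ab1 hT lT hq; have := @t0 (n - 1) (m - 1) S rS q ab2 hS lS ltac:(lia); have := k0 hk lk hq.
  move=> kq rS0 rT0.
  have [W RW cW] := @ub2_gen m n T S 0 Hm ltac:(lia) ltac:(lia).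
  exists W => //; lia.
- subst r.
  have := t1 ab1 hT lT hq; have := @t1 (n - 1) (m - 1) S rS q ab2 hS lS ltac:(lia); have := k1 hk lk hq.
  move=> kq rS0 rT0.
  have [W RW cW] := @ub2_gen m n T S 3 Hm ltac:(lia) ltac:(lia).
  exists W => //; lia.
- subst r.
  have := t2 ab1 hT lT hq; have := @t2 (n - 1) (m - 1) S rS q ab2 hS lS ltac:(lia); have := k2 hk lk hq.
  move=> kq rS0 rT0.
  have [W RW cW] := @ub2_gen m n T S 2 Hm ltac:(lia) ltac:(lia).
  exists W => //; lia.
Qed.

Theorem theorem1p1 (m n : nat) (hm : 0 < m) (hmn : m <= n) :
  (m = 2 -> n = 2 ->
     ~ connected_graph (tensor_graph (complete_graph m) (complete_graph n))) /\
  (3 <= m -> n <= 2 * m - 2 ->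
     metric_dim (tensor_graph (complete_graph m) (complete_graph n))
       = (2 * (m + n - 2) + 2) %/ 3) /\
  (2 <= m -> 2 * m - 1 <= n ->
     metric_dim (tensor_graph (complete_graph m) (complete_graph n)) = n - 1).
Proof.
split; [|split].
- by move=> -> ->; exact: part1.
- move=> m3 n2.
  apply: metric_dim_eq.
  + rewrite card_T; apply: (@leq_trans (m + n)); [lia | nia].
  + exact: ub2.
  + move=> W RW; have := lb2 m3 (leq_trans m3 hmn) RW.
    move: (divn_eq (2 * (m + n - 2) + 2) 3) (@ltn_pmod (2 * (m + n - 2) + 2) 3 isT).
    move: ((2 * (m + n - 2) + 2) %/ 3) ((2 * (m + n - 2) + 2) %% 3) => k r. set c := #|W|. lia.
- move=> m2 n2.
  apply: metric_dim_eq.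
  + rewrite card_T; apply: (@leq_trans n); [lia | rewrite leq_pmull; lia].
  + exact: ub3.
  + move=> W RW.
    have e3 : #|~: [set w.2 | w in W]| <= 1 := @lb_cols m n m2 ltac:(lia) W RW.
    have e2 : #|[set w.2 | w in W]| <= #|W| := leq_imset_card _ _.
    have e1 : #|[set w.2 | w in W]| + #|~: [set w.2 | w in W]| = n by rewrite cardsC card_ord.
    lia.
Qed.
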